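(* For all $n\ge1$, \[ \sum_{\sigma\in\mathcal{C}_{2n+3}} t^{\mathrm{drop}(\sigma)-1}=\sum_{j=0}^{\lfloor n/2\rfloor}\gamma_{n,j}\,t^j(1+t)^{n-2j}, \] where $\gamma_{n,j}$ is the number of primary odd-odd-drop permutations in $\mathcal{C}_{2n+3}$ with $j+1$ drops.
   Context: For $\sigma\in\mathfrak{S}_m$, a drop is a pair $(i,\sigma(i))$ with $i>\sigma(i)$; $\mathrm{drop}(\sigma)$ is the number of drops; a drop is odd-odd if both $i$ and $\sigma(i)$ are odd. $\mathcal{C}_m$ is the set of cyclic permutations of $[m]$ (a single $m$-cycle) all of whose drops are odd-odd. An element $i\in[m]$ is a double drop of $\sigma$ if $\sigma^{-1}(i)>i>\sigma(i)$. A permutation $\sigma\in\mathcal{C}_{2n+3}$ is a primary odd-odd-drop permutation if it has no double drop. *)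

(* Defs.v *)
(* Convention: [m] = {1..m} is represented by 'I_m = {0..m-1},
   the element i : 'I_m standing for the integer i+1. *)
From mathcomp Require Import all_boot all_order all_algebra all_fingroup.
Set Implicit Arguments. Unset Strict Implicit. Unset Printing Implicit Defensive.
Import GRing.Theory.

Definition oddpos (m : nat) (i : 'I_m) : bool := odd (i : nat).+1.

Definition is_drop (m : nat) (s : 'S_m) (i : 'I_m) : bool := s i < i.

Definition dropn (m : nat) (s : 'S_m) : nat := #|[set i | is_drop s i]|.

Definition is_cyclic (m : nat) (s : 'S_m) : bool := #|porbits s| == 1.

Definition odd_odd_drops (m : nat) (s : 'S_m) : bool :=
  [forall i, is_drop s i ==> (oddpos i && oddpos (s i))].

Definition inC (m : nat) (s : 'S_m) : bool := is_cyclic s && odd_odd_drops s.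

Definition double_drop (m : nat) (s : 'S_m) (i : 'I_m) : bool :=
  (i < (s^-1)%g i) && (s i < i).

Definition primary (m : nat) (s : 'S_m) : bool :=
  inC s && [forall i, ~~ double_drop s i].

Definition gamma (n j : nat) : nat :=
  #|[set s : 'S_(2 * n + 3) | primary s && (dropn s == j.+1)]|.

(* Main.v *)
Require Import Defs.
From mathcomp Require Import all_boot all_order all_algebra all_fingroup.
From mathcomp Require Import zify.
Import GRing.Theory.

Set Implicit Arguments. Unset Strict Implicit. Unset Printing Implicit Defensive.

Section Hop.
Variable m : nat.
Implicit Types (r : 'S_m) (x y z w : 'I_m).

Definition oa r x := (x < r x)%N.
Definition od r x := (r x < x)%N.
Definition ia r x := ((r^-1)%g x < x)%N.
Definition idd r x := (x < (r^-1)%g x)%N.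
Definition DA r x := ia r x && oa r x.
Definition typ r x := (oa r x, od r x, ia r x, idd r x).

Definition runP r z i := (iter i.+2 r z < z)%N.
Definition runk r z := find (runP r z) (iota 0 (3 * m)).
Definition rend r z := iter (runk r z).+1 r z.
Definition hop r z : 'S_m :=
  (tperm ((r^-1)%g z) z * tperm ((r^-1)%g z) (rend r z) * r)%g.

Lemma find_iotaE (P : pred nat) k : forall a N, (k < N)%N -> P (a + k)%N ->
  (forall i, (i < k)%N -> ~~ P (a + i)%N) -> find P (iota a N) = k.
Proof.
elim: k => [|k IH] a [|N] //= hkN.
  by rewrite addn0 => ->.
move=> Pk Hb; have := Hb 0%N isT; rewrite addn0 => /negbTE ->.
congr S; apply: IH => //; first by rewrite addSnnS.
by move=> i hi; rewrite addSnnS; apply: Hb.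
Qed.

Lemma iter_inv r z : ((r^-1)%g z) = iter (#|porbit r z|).-1 r z.
Proof.
have p0 : (0 < #|porbit r z|)%N by rewrite lt0n card_porbit_neq0.
have h : r (iter (#|porbit r z|).-1 r z) = z by rewrite -iterS prednK // iter_porbit.
by rewrite -[in LHS]h permK.
Qed.

Lemma runk_spec r z : ia r z ->
  [/\ (runk r z < 3 * m)%N, runP r z (runk r z) &
      forall i, (i < runk r z)%N -> ~~ runP r z i].
Proof.
move=> hia.
set p := #|porbit r z|.
have p0 : (0 < p)%N by rewrite lt0n card_porbit_neq0.
have pm : (p <= m)%N.
  have := subset_leq_card (subsetT (porbit r z)); by rewrite cardsT card_ord.
have hw : runP r z (3 * p - 3).
  rewrite /runP.
  have -> : (3 * p - 3).+2 = ((p.-1) + p + p)%N by lia.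
  by rewrite !iterD !iter_porbit -iter_inv.
have hh : has (runP r z) (iota 0 (3 * m)).
  by apply/hasP; exists (3 * p - 3)%N => //; rewrite mem_iota; lia.
have hlt : (runk r z < 3 * m)%N.
  by move: (has_find (runP r z) (iota 0 (3 * m))); rewrite hh size_iota => /esym /idP.
split => //.
- by move: (nth_find 0%N hh); rewrite nth_iota ?add0n.
- move=> i hi; move: (before_find 0%N hi); rewrite nth_iota ?add0n => [->//|].
  exact: (ltn_trans hi).
Qed.

Lemma run_gt r z : DA r z -> forall j, (0 < j <= (runk r z).+1)%N -> (z < iter j r z)%N.
Proof.
case/andP=> hia hoa; have [_ _ hb] := runk_spec hia.
elim=> [//|j IH] /andP[_ hj].
case: j IH hj => [|j] IH hj; first by [].
have IH' := IH (ltnW hj).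
have hnp := hb j (ltnSE hj).
rewrite /runP -leqNgt leq_eqVlt in hnp.
case/orP: hnp => [/eqP he|//].
exfalso.
have he' : iter j.+2 r z = z by apply: val_inj; exact: (esym he).
have : ((r^-1)%g z = iter j.+1 r z) by rewrite -[in LHS]he' iterS permK.
move=> h; move: hia; rewrite /ia h; lia.
Qed.

Lemma rend_spec r z : DA r z ->
  [/\ (z < rend r z)%N, (r (rend r z) < z)%N & ((r^-1)%g z < z)%N].
Proof.
move=> hda; have /andP[hia hoa] := hda.
have [_ hp _] := runk_spec hia.
split => //; first by apply: run_gt => //; apply/andP.
Qed.

Lemma run_ne r z : DA r z -> forall j, (0 < j < (runk r z).+1)%N ->
  iter j r z != rend r z.
Proof.
move=> hda j /andP[j0 jK]; apply/eqP => he.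
have [_ h2 _] := rend_spec hda.
have := run_gt hda (j := j.+1); rewrite iterS he; move: h2 jK; lia.
Qed.

Lemma hopE r z x : DA r z ->
  hop r z x = if x == (r^-1)%g z then r z else if x == z then r (rend r z)
              else if x == rend r z then z else r x.
Proof.
move=> hda; have [h1 h2 h3] := rend_spec hda.
rewrite /hop !permM.
have ne1 : (r^-1)%g z != z by apply/eqP=> e; move: h3; rewrite e ltnn.
have ne2 : (r^-1)%g z != rend r z by apply/eqP=> e; move: h3 h1; rewrite e; lia.
have ne3 : z != rend r z by apply/eqP=> e; move: h1; rewrite -e ltnn.
case: (eqVneq x ((r^-1)%g z)) => [->|nx1].
  by rewrite tpermL tpermD // eq_sym.
case: (eqVneq x z) => [->|nx2].
  by rewrite tpermR tpermL.
case: (eqVneq x (rend r z)) => [->|nx3].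
  by rewrite (tpermD ne2 ne3) tpermR permKV.
by rewrite !tpermD // eq_sym.
Qed.

Lemma hop_out r z x : DA r z -> x != z ->
  ((hop r z x < x) = (r x < x))%N /\ ((x < hop r z x) = (x < r x))%N.
Proof.
move=> hda nxz; have [h1 h2 h3] := rend_spec hda.
have hoa : (z < r z)%N by case/andP: hda.
rewrite hopE // (negbTE nxz).
case: (eqVneq x ((r^-1)%g z)) => [->|nx1]; first by rewrite permKV; split; lia.
case: (eqVneq x (rend r z)) => [->|nx3] //; split; lia.
Qed.

Lemma hop_in r z x : DA r z -> x != z ->
  (((hop r z)^-1)%g x < x)%N = (((r^-1)%g x) < x)%N /\
  (x < ((hop r z)^-1)%g x)%N = (x < ((r^-1)%g x))%N.
Proof.
move=> hda nxz; have [h1 h2 h3] := rend_spec hda.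
have hoa : (z < r z)%N by case/andP: hda.
set w := ((hop r z)^-1)%g x.
have hw : hop r z w = x by rewrite /w permKV.
rewrite hopE // in hw.
move: hw; case: (eqVneq w ((r^-1)%g z)) => [->|nw1].
  by move=> <-; rewrite permK; split; lia.
case: (eqVneq w z) => [->|nw2].
  by move=> <-; rewrite permK; split; lia.
case: (eqVneq w (rend r z)) => [->|nw3].
  by move=> e; rewrite -e eqxx in nxz.
by move=> <-; rewrite permK.
Qed.

Lemma hop_typ r z x : DA r z -> x != z -> typ (hop r z) x = typ r x.
Proof.
move=> hda nxz; have [o1 o2] := hop_out hda nxz; have [i1 i2] := hop_in hda nxz.
by rewrite /typ /oa /od /ia /idd o1 o2 i1 i2.
Qed.

Lemma hop_z r z : DA r z -> typ (hop r z) z = (false, true, false, true).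
Proof.
move=> hda; have [h1 h2 h3] := rend_spec hda.
have hoa : (z < r z)%N by case/andP: hda.
have ne1 : (r^-1)%g z != z by apply/eqP=> e; move: h3; rewrite e ltnn.
have hz : hop r z z = r (rend r z) by rewrite hopE // eq_sym (negbTE ne1) eqxx.
have ne3 : rend r z != (r^-1)%g z by apply/eqP=> e; move: h3 h1; rewrite e; lia.
have ne4 : rend r z != z by apply/eqP=> e; move: h1; rewrite e ltnn.
have he : hop r z (rend r z) = z by rewrite hopE // (negbTE ne3) (negbTE ne4) eqxx.
have hi : ((hop r z)^-1)%g z = rend r z by apply: (@perm_inj _ (hop r z)); rewrite permKV he.
rewrite /typ /oa /od /ia /idd hz hi.
congr (_, _, _, _); apply/idP/idP; lia.
Qed.

Lemma cyc_closed r (A : {set 'I_m}) x y : is_cyclic r ->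
  (forall w, w \in A -> r w \in A) -> x \in A -> y \in A.
Proof.
move=> /cards1P [P hP] hA hx.
have hx' : porbit r x = P by apply/set1P; rewrite -hP; apply: imset_f.
have hy' : porbit r y = P by apply/set1P; rewrite -hP; apply: imset_f.
have : y \in porbit r x by rewrite hx' -hy' porbit_id.
case/porbitP => i ->.
elim: i => [|i IH]; first by rewrite perm1.
by rewrite expgSr permM; apply: hA.
Qed.

Lemma cyc_intro r (x0 : 'I_m) : (forall x y, y \in porbit r x) -> is_cyclic r.
Proof.
move=> h; apply/cards1P; exists (porbit r x0); apply/setP => P.
rewrite inE; apply/imsetP/eqP => [[x _ ->]|->]; last by exists x0.
by apply/eqP; rewrite eq_porbit_mem.
Qed.

Lemma porbit_step r x w : (r w \in porbit r x) = (w \in porbit r x).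
Proof.
by rewrite porbit_sym; have := porbit_perm r 1 w; rewrite expg1 => ->; rewrite -porbit_sym.
Qed.

Lemma hop_run r z j : DA r z -> (0 < j < (runk r z).+1)%N ->
  hop r z (iter j r z) = iter j.+1 r z.
Proof.
move=> hda hj; have [h1 h2 h3] := rend_spec hda.
have hg := run_gt hda (j := j); have hn := run_ne hda hj.
have hg' : (z < iter j r z)%N by apply: hg; case/andP: hj => -> /ltnW ->.
rewrite hopE // (negbTE hn) iterS.
have -> : (iter j r z == (r^-1)%g z) = false by apply/eqP => e; move: hg'; rewrite e; lia.
by have -> : (iter j r z == z) = false by apply/eqP => e; move: hg'; rewrite e ltnn.
Qed.

Lemma hop_cyc r z : is_cyclic r -> DA r z -> is_cyclic (hop r z).
Proof.
move=> hc hda; apply: (cyc_intro z) => x y.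
set A := porbit (hop r z) x.
have hst w : (hop r z w \in A) = (w \in A) by apply: porbit_step.
have [h1 h2 h3] := rend_spec hda.
have hoa : (z < r z)%N by case/andP: hda.
have ne1 : (r^-1)%g z != z by apply/eqP=> e; move: h3; rewrite e ltnn.
have ne3 : rend r z != (r^-1)%g z by apply/eqP=> e; move: h3 h1; rewrite e; lia.
have ne4 : rend r z != z by apply/eqP=> e; move: h1; rewrite e ltnn.
have hs1 : hop r z ((r^-1)%g z) = r z by rewrite hopE // eqxx.
have hz : hop r z z = r (rend r z) by rewrite hopE // eq_sym (negbTE ne1) eqxx.
have he : hop r z (rend r z) = z by rewrite hopE // (negbTE ne3) (negbTE ne4) eqxx.
have hch : forall j, (0 < j <= (runk r z).+1)%N ->
    (iter j r z \in A) = ((r^-1)%g z \in A).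
  elim=> [//|j IH] /andP[_ hj].
  case: j IH hj => [|j] IH hj; first by rewrite /= -hs1 hst.
  have hr : hop r z (iter j.+1 r z) = iter j.+2 r z by apply: hop_run.
  rewrite -hr hst; apply: IH; exact: ltnW hj.
have hes : (rend r z \in A) = ((r^-1)%g z \in A) by apply: hch; rewrite /= leqnn.
have hze : (z \in A) = (rend r z \in A) by rewrite -[in RHS]hst he.
apply: (@cyc_closed r A x y hc); last by apply: porbit_id.
move=> w hw.
case: (eqVneq w ((r^-1)%g z)) => [e|n1].
  by rewrite e permKV hze hes -e.
case: (eqVneq w z) => [e|n2].
  by rewrite e -hs1 hst -hes -hze -e.
case: (eqVneq w (rend r z)) => [e|n3].
  by rewrite e -hz hst hze -e.
have : hop r z w = r w by rewrite hopE // (negbTE n1) (negbTE n2) (negbTE n3).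
by move=> <-; rewrite hst.
Qed.

Lemma hop_hop_inv r z : DA r z -> hop ((hop r z)^-1)%g z = (r^-1)%g.
Proof.
move=> hda; have [h1 h2 h3] := rend_spec hda.
have hoa : (z < r z)%N by case/andP: hda.
have [hk _ _] := runk_spec (proj1 (andP hda)).
set K := (runk r z).+1.
set mu := ((hop r z)^-1)%g.
have muV : (mu^-1)%g = hop r z by rewrite /mu invgK.
have ne1 : (r^-1)%g z != z by apply/eqP=> e; move: h3; rewrite e ltnn.
have ne3 : rend r z != (r^-1)%g z by apply/eqP=> e; move: h3 h1; rewrite e; lia.
have ne4 : rend r z != z by apply/eqP=> e; move: h1; rewrite e ltnn.
have hs1 : hop r z ((r^-1)%g z) = r z by rewrite hopE // eqxx.
have hz : hop r z z = r (rend r z) by rewrite hopE // eq_sym (negbTE ne1) eqxx.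
have he : hop r z (rend r z) = z by rewrite hopE // (negbTE ne3) (negbTE ne4) eqxx.
have muE w v : hop r z w = v -> mu v = w by move=> <-; rewrite /mu permK.
have hit : forall j, (0 < j <= K)%N -> iter j mu z = iter (K.+1 - j) r z.
  elim=> [//|j IH] /andP[_ hj].
  case: j IH hj => [|j] IH hj.
    have -> : (K.+1 - 1 = K)%N by lia.
    by rewrite /= (muE _ _ he).
  rewrite iterS IH ?(ltnW hj) //.
  have -> : (K.+1 - j.+1 = (K - j.+1).+1)%N by lia.
  apply: muE; apply: hop_run => //; rewrite /K; lia.
have hK1 : iter K.+1 mu z = (r^-1)%g z.
  by rewrite iterS hit ?leqnn // subSn // subnn /= (muE _ _ hs1).
have hdam : DA mu z.
  rewrite /DA /ia /oa muV hz (muE _ _ he); apply/andP; split => //.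
have hrk : runk mu z = runk r z.
  apply: find_iotaE => //; first by rewrite /runP add0n hK1.
  move=> i hi; rewrite /runP add0n hit; last by rewrite /K; lia.
  rewrite -leqNgt; apply: ltnW; apply: run_gt => //; rewrite /K; lia.
have hre : rend mu z = r z.
  by rewrite /rend hrk -/K hit ?leqnn // subSn // subnn.
apply/permP => x.
rewrite hopE // muV hre (muE _ _ hs1).
case: (eqVneq x (hop r z z)) => [->|n1]; first by rewrite hz permK (muE _ _ he).
case: (eqVneq x z) => [->|n2]; first by [].
case: (eqVneq x (r z)) => [->|n3]; first by rewrite permK.
set w := mu x.
have hw : hop r z w = x by rewrite /w /mu permKV.
move: hw; rewrite hopE //.
case: (eqVneq w ((r^-1)%g z)) => [_ e|nw1]; first by rewrite -e eqxx in n3.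
case: (eqVneq w z) => [_ e|nw2]; first by rewrite -e hz eqxx in n1.
case: (eqVneq w (rend r z)) => [_ e|nw3]; first by rewrite -e eqxx in n2.
by move=> <-; rewrite permK.
Qed.

Definition back r z : 'S_m := ((hop (r^-1)%g z)^-1)%g.
Definition DDp r z := idd r z && od r z.

Lemma DA_inv r z : DA (r^-1)%g z = DDp r z.
Proof. by rewrite /DA /DDp /ia /oa /idd /od invgK andbC. Qed.

Lemma back_hop r z : DA r z -> back (hop r z) z = r.
Proof. by move=> h; rewrite /back hop_hop_inv // invgK. Qed.

Lemma hop_back r z : DDp r z -> hop (back r z) z = r.
Proof. by rewrite -DA_inv => h; rewrite /back hop_hop_inv // invgK. Qed.

Lemma back_DA r z : DDp r z -> DA (back r z) z.
Proof.
rewrite -DA_inv => h; rewrite /back DA_inv /DDp.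
by have := hop_z h; rewrite /typ => -[_ -> _ ->].
Qed.

Lemma back_typ r z x : DDp r z -> x != z -> typ (back r z) x = typ r x.
Proof.
move=> h nx; rewrite -{2}(hop_back h); symmetry; apply: hop_typ => //.
exact: back_DA.
Qed.

Lemma cyc_inv r : is_cyclic (r^-1)%g = is_cyclic r.
Proof. by rewrite /is_cyclic porbitsV. Qed.

Lemma back_cyc r z : is_cyclic r -> DDp r z -> is_cyclic (back r z).
Proof.
move=> hc h; rewrite /back cyc_inv; apply: hop_cyc; first by rewrite cyc_inv.
by rewrite DA_inv.
Qed.

Lemma oo_typ r : odd_odd_drops r =
  [forall x, (od r x ==> oddpos x) && (idd r x ==> oddpos x)].
Proof.
apply/forallP/forallP => h x.
  apply/andP; split; apply/implyP => hx.
    by have /implyP/(_ hx)/andP[] := h x.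
  have hd : is_drop r ((r^-1)%g x) by rewrite /is_drop permKV.
  by have /implyP/(_ hd)/andP[_] := h ((r^-1)%g x); rewrite permKV.
apply/implyP => hd; apply/andP; split.
  by have /andP[/implyP ->] := h x.
have /andP[_ /implyP] := h (r x); apply; by rewrite /idd permK.
Qed.

Lemma oo_transfer r r' z : odd_odd_drops r ->
  (forall x, x != z -> typ r' x = typ r x) ->
  ((od r' z || idd r' z) -> oddpos z) -> odd_odd_drops r'.
Proof.
rewrite !oo_typ => /forallP h ht hz; apply/forallP => x.
case: (eqVneq x z) => [->|nx].
  by apply/andP; split; apply/implyP => hh; apply: hz; rewrite hh ?orbT.
have := ht x nx; rewrite /typ => -[_ -> _ ->]; exact: h.
Qed.

Lemma DA_typ r r' x : typ r x = typ r' x -> DA r x = DA r' x.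
Proof. by rewrite /typ /DA => -[-> _ -> _]. Qed.

Lemma DDp_typ r r' x : typ r x = typ r' x -> DDp r x = DDp r' x.
Proof. by rewrite /typ /DDp => -[_ -> _ ->]. Qed.

Lemma DA_notDD r x : DA r x -> ~~ od r x && ~~ idd r x.
Proof. by rewrite /DA /oa /od /ia /idd => /andP[h1 h2]; apply/andP; split; rewrite -leqNgt ltnW. Qed.

Definition ODAp r x := oddpos x && DA r x.
Definition Hops (l : seq 'I_m) r := foldr (fun z s => hop s z) r l.
Definition Backs (l : seq 'I_m) r := foldl (fun s z => back s z) r l.
Definition DDt := (false, true, false, true).

Lemma typ_DDp r x : typ r x = DDt -> DDp r x.
Proof. by rewrite /typ /DDp => -[_ -> _ ->]. Qed.

Lemma dropn_hop r z : DA r z -> dropn (hop r z) = (dropn r).+1.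
Proof.
move=> hda; rewrite /dropn.
have -> : [set i | is_drop (hop r z) i] = z |: [set i | is_drop r i].
  apply/setP => x; rewrite !inE.
  case: (eqVneq x z) => [->|nx] /=.
    by have := hop_z hda; rewrite /typ => -[_ h _ _]; rewrite /is_drop; move: h; rewrite /od => ->.
  by have := hop_typ hda nx; rewrite /typ => -[_ h _ _]; move: h; rewrite /od /is_drop => ->.
rewrite cardsU1 inE.
by have /andP[/negbTE h _] := DA_notDD hda; move: h; rewrite /od /is_drop => ->.
Qed.

Lemma hops_prop l : forall r, uniq l -> all (ODAp r) l -> inC r ->
  [/\ inC (Hops l r), (forall x, x \notin l -> typ (Hops l r) x = typ r x),
      (forall x, x \in l -> typ (Hops l r) x = DDt),
      dropn (Hops l r) = (dropn r + size l)%N & Backs l (Hops l r) = r].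
Proof.
elim: l => [|z l IH] r /=.
  by move=> _ _ h; split => //; rewrite addn0.
case/andP => zl ul /andP[/andP[oz dz] al] hc.
have [c1 c2 c3 c4 c5] := IH r ul al hc.
set H := Hops l r.
have dH : DA H z by rewrite (DA_typ (c2 z zl)).
have /andP[cy oo] := c1.
split.
- apply/andP; split; first exact: hop_cyc.
  apply: (oo_transfer (z := z) oo); first by move=> x nx; apply: hop_typ.
  by move=> _.
- move=> x; rewrite inE negb_or => /andP[nx nl].
  by rewrite hop_typ // c2.
- move=> x; rewrite inE => /orP[/eqP ->|xl]; first exact: hop_z.
  have nx : x != z by apply: contraNneq zl => <-.
  by rewrite hop_typ // c3.
- by rewrite dropn_hop // c4 addnS.
- by rewrite /Backs /= back_hop // -/(Backs l H) c5.
Qed.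

Lemma backs_prop l : forall r, uniq l -> all (DDp r) l -> inC r ->
  [/\ inC (Backs l r), (forall x, x \notin l -> typ (Backs l r) x = typ r x),
      (forall x, x \in l -> DA (Backs l r) x) & Hops l (Backs l r) = r].
Proof.
elim: l => [|z l IH] r /=.
  by move=> _ _ h; split.
case/andP => zl ul /andP[dz al] /andP[cy oo].
set r' := back r z.
have hda := back_DA dz.
have ht x : x != z -> typ r' x = typ r x by apply: back_typ.
have hc' : inC r'.
  apply/andP; split; first exact: back_cyc.
  apply: (oo_transfer (z := z) oo) => //.
  by have /andP[/negbTE -> /negbTE ->] := DA_notDD hda.
have al' : all (DDp r') l.
  apply/allP => x xl; have nx : x != z by apply: contraNneq zl => <-.
  by rewrite (DDp_typ (ht x nx)); exact: (allP al).
have [c1 c2 c3 c4] := IH r' ul al' hc'.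
rewrite /Backs /= -/r' -/(Backs l r').
split => //.
- move=> x; rewrite inE negb_or => /andP[nx nl].
  by rewrite c2 // ht.
- move=> x; rewrite inE => /orP[/eqP ->|xl]; last exact: c3.
  by rewrite (DA_typ (c2 z zl)).
- by rewrite /Hops /= -/(Hops l _) c4 hop_back.
Qed.

Lemma nofix r x : is_cyclic r -> (1 < m)%N -> r x != x.
Proof.
move=> hc hm; apply/eqP => hx.
have h0 : (0 < m)%N by apply: ltn_trans hm.
have cl : forall w, w \in [set x] -> r w \in [set x].
  by move=> w /set1P ->; rewrite hx set11.
have a := @cyc_closed r [set x] x (Ordinal h0) hc cl (set11 x).
have b := @cyc_closed r [set x] x (Ordinal hm) hc cl (set11 x).
by move: a b => /set1P a /set1P b; move: (congr1 val (etrans a (esym b))).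
Qed.

Lemma dropn_pos r : is_cyclic r -> (1 < m)%N -> (0 < dropn r)%N.
Proof.
move=> hc hm.
have hm' : (m.-1 < m)%N by rewrite prednK // ltnW.
set xm := Ordinal hm'.
rewrite /dropn card_gt0; apply/set0Pn; exists xm; rewrite inE /is_drop.
have h1 := nofix xm hc hm.
have h2 : (r xm <= m.-1)%N by rewrite -ltnS prednK ?ltn_ord // ltnW.
rewrite ltn_neqAle h2 andbT; apply: contra h1 => /eqP e; apply/eqP/val_inj => /=.
by rewrite e.
Qed.

Lemma card_odd_ord : #|[set x : 'I_m | odd x]| = m./2.
Proof.
rewrite -sum1_card big_mkcond /=.
rewrite (eq_bigr (fun i : 'I_m => (odd i : nat))); last by move=> i _; rewrite inE; case: (odd i).
elim: m => [|k IH]; first by rewrite big_ord0.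
by rewrite big_ord_recr /= IH uphalf_half addnC.
Qed.

Lemma card_ODA r : primary r -> (1 < m)%N ->
  (#|[set x | ODAp r x]| + 2 * dropn r + m./2)%N = m.
Proof.
case/andP => /andP[hc oo] /forallP hnd hm.
move: oo; rewrite oo_typ => /forallP oo.
set P := [set x | od r x].
set Q := [set x | idd r x].
have dP : dropn r = #|P| by [].
have cQ : #|Q| = #|P|.
  have -> : Q = (r^-1)%g @^-1: P by apply/setP => x; rewrite !inE /od /idd permKV.
  apply: card_preimset; exact: perm_inj.
have dis : P :&: Q = set0.
  apply/setP => x; rewrite !inE; have := hnd x.
  by rewrite /double_drop /idd /od andbC => /negbTE ->.
have hDA : [set x | DA r x] = ~: (P :|: Q).
  apply/setP => x; rewrite !inE /DA /ia /oa /od /idd.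
  have n1 := nofix x hc hm.
  have n2 : (r^-1)%g x != x.
    by apply: contra n1 => /eqP e; rewrite -{1}e permKV.
  have n1' : (nat_of_ord (r x) != x) by rewrite (inj_eq val_inj).
  have n2' : (nat_of_ord ((r^-1)%g x) != x) by rewrite (inj_eq val_inj).
  move: n1' n2'; clear; move=> n1 n2.
  apply/idP/idP; lia.
have hE : [set x : 'I_m | odd x] \subset [set x | DA r x].
  apply/subsetP => x; rewrite hDA !inE negb_or => hx.
  have := oo x; rewrite /oddpos /= hx /= !implybF => /andP[-> ->] //.
have c1 := cardsID [set x : 'I_m | odd x] [set x | DA r x].
have e1 : [set x | DA r x] :&: [set x : 'I_m | odd x] = [set x : 'I_m | odd x].
  by apply/setIidPr.
have e2 : [set x | ODAp r x] = [set x | DA r x] :\: [set x : 'I_m | odd x].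
  by apply/setP => x; rewrite !inE /ODAp /oddpos /= andbC.
rewrite e1 -e2 in c1.
have c2 := cardsC (P :|: Q).
rewrite cardsU dis cards0 subn0 card_ord -hDA in c2.
rewrite card_odd_ord in c1.
rewrite dP; lia.
Qed.

Definition DDset r := [set x | DDp r x].
Definition Phi r := (Backs (enum (DDset r)) r, DDset r).
Definition Psi (p : 'S_m * {set 'I_m}) := Hops (enum p.2) p.1.
Definition pairs (p : 'S_m * {set 'I_m}) :=
  primary p.1 && (p.2 \subset [set x | ODAp p.1 x]).

Lemma all_enumP (P : pred 'I_m) (A : {set 'I_m}) :
  (forall x, x \in A -> P x) -> all P (enum A).
Proof. by move=> h; apply/allP => x; rewrite mem_enum; apply: h. Qed.

Lemma Phi_spec r : inC r -> Psi (Phi r) = r /\ pairs (Phi r).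
Proof.
move=> hc.
have al : all (DDp r) (enum (DDset r)) by apply: all_enumP => x; rewrite inE.
have [c1 c2 c3 c4] := backs_prop (enum_uniq _) al hc.
split => //.
have /andP[_ oo] := hc.
move: oo; rewrite oo_typ => /forallP oo.
apply/andP; split => /=.
  apply/andP; split => //; apply/forallP => x.
  case: (boolP (x \in enum (DDset r))) => hx.
    by have /DA_notDD/andP[/negbTE h1 _] := c3 x hx; rewrite /double_drop; move: h1; rewrite /od => ->; rewrite andbF.
  change (~~ DDp (Backs (enum (DDset r)) r) x); rewrite (DDp_typ (c2 x hx)).
  by move: hx; rewrite mem_enum inE.
apply/subsetP => x hx; rewrite inE /ODAp c3 ?mem_enum // andbT.
move: hx; rewrite inE /DDp => /andP[_ h].
by have /andP[/implyP h1 _] := oo x; apply: h1.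
Qed.

Lemma Psi_spec p : pairs p ->
  [/\ inC (Psi p), Phi (Psi p) = p & dropn (Psi p) = (dropn p.1 + #|p.2|)%N].
Proof.
case: p => pi S /andP[/= hp hS].
have hc : inC pi by case/andP: hp.
have al : all (ODAp pi) (enum S).
  by apply: all_enumP => x hx; move/subsetP: hS => /(_ x hx); rewrite inE.
have [c1 c2 c3 c4 c5] := hops_prop (enum_uniq _) al hc.
have hD : DDset (Psi (pi, S)) = S.
  apply/setP => x; rewrite inE.
  case: (boolP (x \in S)) => hx.
    by apply: typ_DDp; apply: c3; rewrite mem_enum.
  rewrite /Psi /= (DDp_typ (c2 x _)) ?mem_enum //.
  have /andP[_ /forallP h] := hp.
  by apply/negbTE; have := h x.
split => //.
  by rewrite /Phi hD /Psi /= c5.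
by rewrite /Psi /= c4 cardE.
Qed.

End Hop.

Section Main.
Import GRing.Theory.
Local Open Scope ring_scope.

Lemma sum_subset_pow (R : comRingType) (T : finType) (A : {set T}) (x : R) :
  \sum_(S : {set T} | S \subset A) x ^+ #|S| = (1 + x) ^+ #|A|.
Proof.
have := @bigA_distr R 0 1 *%R +%R T (fun i => if i \in A then x else 0) (fun _ => 1).
rewrite (eq_bigr (fun i => if i \in A then 1 + x else 1)); last first.
  by move=> i _; case: (i \in A) => /=; rewrite ?add0r // addrC.
rewrite -big_mkcond prodr_const => ->.
rewrite big_mkcond /=; apply: eq_big => // J _.
rewrite -big_mkcond /=.
case: (boolP (J \subset A)) => hJ.
  rewrite (eq_bigr (fun _ => x)); first by rewrite prodr_const.
  by move=> i hi; rewrite (subsetP hJ i hi).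
have [i /andP[hiJ hiA]] : exists i, (i \in J) && (i \notin A).
  by move: hJ => /subsetPn [i hi hn]; exists i; rewrite hi hn.
by rewrite (bigD1 i) //= (negbTE hiA) mul0r.
Qed.

Lemma main_sum (m : nat) : (1 < m)%N ->
  \sum_(s : 'S_m | inC s) ('X^(dropn s - 1) : {poly int}) =
  \sum_(pi : 'S_m | primary pi) 'X^(dropn pi - 1) * (1 + 'X) ^+ #|[set x | ODAp pi x]|.
Proof.
move=> hm.
rewrite (reindex_onto (@Psi m) (@Phi m)); last by move=> s hs; case: (Phi_spec hs).
rewrite (eq_bigl (@pairs m)); last first.
  move=> p; apply/idP/idP.
    by case/andP => hc /eqP <-; case: (Phi_spec hc).
  by move=> hp; have [c1 c2 _] := Psi_spec hp; rewrite c1 c2 eqxx.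
rewrite (eq_bigr (fun p : 'S_m * {set 'I_m} => ('X^(dropn p.1 - 1) * 'X^#|p.2| : {poly int}))); last first.
  move=> p hp; have [c1 _ c3] := Psi_spec hp; rewrite c3 -exprD; congr (_ ^+ _).
  have : (0 < dropn p.1)%N.
    by apply: dropn_pos => //; case/andP: hp => /andP[/andP[]].
  lia.
rewrite /pairs.
rewrite -(pair_big_dep (fun pi : 'S_m => primary pi)
   (fun (pi : 'S_m) (S : {set 'I_m}) => S \subset [set x | ODAp pi x])
   (fun (pi : 'S_m) (S : {set 'I_m}) => ('X^(dropn pi - 1) * 'X^#|S| : {poly int}))).
by apply: eq_bigr => pi _; rewrite -big_distrr /= sum_subset_pow.
Qed.

End Main.

Unset Implicit Arguments.
Import GRing.Theory.
Local Open Scope ring_scope.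

Theorem mainTheorem11 (n : nat) (hn : (1 <= n)%N) :
  \sum_(s : 'S_(2 * n + 3) | inC s) ('X^(dropn s - 1) : {poly int})
  = \sum_(j < n./2.+1)
      (gamma n j)%:R *: ('X^j * (1 + 'X) ^+ (n - 2 * j)).
Proof.
have hm : (1 < 2 * n + 3)%N by lia.
have h2 : ((2 * n + 3)./2 = n.+1)%N.
  by rewrite (_ : 2 * n + 3 = true + (n.+1).*2)%N ?half_bit_double //; rewrite -mul2n; lia.
have hodd := odd_double_half n.
rewrite main_sum //.
rewrite (partition_big (fun pi : 'S_(2*n+3) => (inord (dropn pi).-1 : 'I_(n./2.+1))) xpredT) //=.
apply: eq_bigr => j _.
rewrite /gamma scaler_nat -sumr_const.
apply: eq_big => [pi|pi].
  rewrite inE; case: (boolP (primary pi)) => hp //=.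
  have hd : (0 < dropn pi)%N by apply: dropn_pos => //; case/andP: hp => /andP[].
  have hc := card_ODA hp hm; rewrite h2 in hc.
  have hk : ((dropn pi).-1 < n./2.+1)%N by rewrite -mul2n in hodd; lia.
  rewrite -(inj_eq val_inj) /= inordK //.
  by apply/eqP/eqP; lia.
case/andP => hp /eqP hj.
have hd : (0 < dropn pi)%N by apply: dropn_pos => //; case/andP: hp => /andP[].
have hc := card_ODA hp hm; rewrite h2 in hc.
have hk : ((dropn pi).-1 < n./2.+1)%N by rewrite -mul2n in hodd; lia.
move: hj => /(congr1 val); rewrite /= inordK // => hj.
rewrite (_ : (dropn pi - 1 = j)%N); last lia.
by rewrite (_ : #|[set x | ODAp pi x]| = (n - 2 * j)%N); last lia.
Qed.
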